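(* Let $E=\frac{\sqrt{15}}{4}\begin{pmatrix}1&0\\0&0\end{pmatrix}$ and $B=\frac18\begin{pmatrix}1&1\\1&1\end{pmatrix}$, with Bloch representations $e^0=\sqrt{15}/4$, $\vec e=(0,0,\sqrt{15}/4)$, $b^0=1/4$, $\vec b=\tfrac14(1,0,0)$. Then $\|\vec e\|^2+\|\vec b\|^2-(\vec e\cdot\vec b)^2=1$, yet the two-outcome POVMs $(E,\mathbb 1-E)$ and $(B,\mathbb 1-B)$ are not jointly measurable.
   Context: A qubit effect $E$ is written $E=\tfrac12(e^0\mathbb 1+\vec e\cdot\vec\sigma)$ with $\vec\sigma$ the vector of Pauli matrices. Two POVMs $(E_i)$, $(B_j)$ are jointly measurable if there is a POVM $(N_{ij})$ with $\sum_jN_{ij}=E_i$, $\sum_iN_{ij}=B_j$. *)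

(* Defs.v *)
(* Scalars: C = R[i] for an arbitrary real closed field R
   (R = the reals is the intended instance). *)
From HB Require Import structures.
From mathcomp Require Import all_boot all_order all_algebra.
From mathcomp Require Import complex.
Set Implicit Arguments. Unset Strict Implicit. Unset Printing Implicit Defensive.
Import Order.TTheory GRing.Theory Num.Theory.
Local Open Scope complex_scope.
Local Open Scope ring_scope.

Section Qubit.
Variable R : rcfType.
Local Notation C := (R[i]).

(* positive semidefinite 2x2 complex matrix: <v, A v> >= 0 for all v
   (the order on C: 0 <= z iff z is real and nonnegative) *)
Definition psd (A : 'M[C]_2) : Prop :=
  forall v : 'cV[C]_2, 0 <= \sum_(i < 2) \sum_(j < 2) (v i 0)^* * A i j * v j 0.

Definition effect (E : 'M[C]_2) : Prop := psd E /\ psd (1%:M - E).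

Definition povm2 (E : 'M[C]_2) : 'I_2 -> 'M[C]_2 :=
  fun i => if i == ord0 then E else 1%:M - E.

Definition jointly_measurable m n (Ep : 'I_m -> 'M[C]_2) (Bp : 'I_n -> 'M[C]_2)
  : Prop :=
  exists N : 'I_m -> 'I_n -> 'M[C]_2,
    (forall i j, psd (N i j)) /\
    (forall i, \sum_(j < n) N i j = Ep i) /\
    (forall j, \sum_(i < m) N i j = Bp j).

Definition pauli (k : 'I_3) : 'M[C]_2 :=
  if val k == 0%N then \matrix_(i < 2, j < 2) (if i == j then 0 else 1)
  else if val k == 1%N then
    \matrix_(i < 2, j < 2)
      (if i == j then 0 else if val i == 0%N then - 'i else 'i)
  else \matrix_(i < 2, j < 2)
      (if i == j then (if val i == 0%N then 1 else -1) else 0).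

Definition bloch (e0 : R) (e : 'rV[R]_3) : 'M[C]_2 :=
  2^-1 *: ((e0%:C) %:M + \sum_(k < 3) (e 0 k)%:C *: pauli k).

Definition dot3 (u v : 'rV[R]_3) : R := \sum_(k < 3) u 0 k * v 0 k.

End Qubit.

Definition Emat (R : rcfType) : 'M[R[i]]_2 :=
  \matrix_(i < 2, j < 2)
    (if (val i == 0%N) && (val j == 0%N) then (Num.sqrt (15 : R) / 4)%:C else 0).
Definition Bmat (R : rcfType) : 'M[R[i]]_2 :=
  \matrix_(i < 2, j < 2) ((1 / 8 : R)%:C).
Definition evec (R : rcfType) : 'rV[R]_3 := \row_(k < 3) (if val k == 2%N then Num.sqrt 15 / 4 else 0).
Definition bvec (R : rcfType) : 'rV[R]_3 := \row_(k < 3) (if val k == 0%N then 1 / 4 else 0).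

(* Main.v *)
Require Import Defs.
From HB Require Import structures.
From mathcomp Require Import all_boot all_order all_algebra.
From mathcomp Require Import complex.
From mathcomp Require Import ring lra.
Import Order.TTheory GRing.Theory Num.Theory.
Local Open Scope ring_scope.
Local Open Scope complex_scope.

Section S.
Variable R : rcfType.

Lemma psd_form (A : 'M[R[i]]_2) (v : 'cV[R[i]]_2) :
  \sum_(i < 2) \sum_(j < 2) (v i 0)^* * A i j * v j 0 =
  (v 0 0)^* * A 0 0 * v 0 0 + (v 0 0)^* * A 0 1 * v 1 0 +
  (v 1 0)^* * A 1 0 * v 0 0 + (v 1 0)^* * A 1 1 * v 1 0.
Proof.
rewrite !big_ord_recr !big_ord0 /= !add0r.
have -> : widen_ord (leqnSn 1) ord_max = 0 :> 'I_2 by apply/val_inj.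
have -> : ord_max = 1 :> 'I_2 by apply/val_inj.
by rewrite !addrA.
Qed.

Lemma sqrt15 : Num.sqrt (15:R) ^+ 2 = 15 /\ 0 <= Num.sqrt (15:R).
Proof. by rewrite sqr_sqrtr ?sqrtr_ge0 // ler0n. Qed.

Lemma effE : effect (Emat R).
Proof.
have [h1 h2] := sqrt15.
split => v; rewrite psd_form !mxE /=;
case: (v 0 0) => a b; case: (v 1 0) => c d; rewrite lecE; simpc => /=;
apply/andP; split; try (apply/eqP; ring).
  move: h1 h2; set s := Num.sqrt 15 => h1 h2.
  have : 0 <= s * (a*a + b*b) by apply: mulr_ge0 => //; nra.
  nra.
move: h1 h2; set s := Num.sqrt 15 => h1 h2.
have hs4 : s <= 4 by nra.
have : 0 <= (4 - s) * (a*a + b*b) by apply: mulr_ge0; nra.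
nra.
Qed.

Lemma effB : effect (Bmat R).
Proof.
split => v; rewrite psd_form !mxE /=;
case: (v 0 0) => a b; case: (v 1 0) => c d; rewrite lecE; simpc => /=;
apply/andP; split; try (apply/eqP; ring).
  have := sqr_ge0 (a+c); have := sqr_ge0 (b+d). nra.
have := sqr_ge0 (a-c); have := sqr_ge0 (b-d); have := sqr_ge0 a; have := sqr_ge0 b;
have := sqr_ge0 c; have := sqr_ge0 d. nra.
Qed.
End S.

Section S.
Variable R : rcfType.
Lemma blE : Emat R = bloch (Num.sqrt 15 / 4) (evec R).
Proof.
apply/matrixP => i j; rewrite /bloch /pauli !mxE !big_ord_recr big_ord0 /= !mxE /=.
case: i => [[|[|?]] ?] //; case: j => [[|[|?]] ?] //=; simpc; apply/eqP; rewrite eq_complex /=; apply/andP; split; apply/eqP.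
all: by field.
Qed.
End S.
Section T.
Variable R : rcfType.
Lemma blB : Bmat R = bloch (1 / 4) (bvec R).
Proof.
apply/matrixP => i j; rewrite /bloch /pauli !mxE !big_ord_recr big_ord0 /= !mxE /=.
case: i => [[|[|?]] ?] //; case: j => [[|[|?]] ?] //=; simpc; apply/eqP; rewrite eq_complex /=; apply/andP; split; apply/eqP.
all: by field.
Qed.
Lemma dotE : dot3 (evec R) (evec R) + dot3 (bvec R) (bvec R)
    - (dot3 (evec R) (bvec R)) ^+ 2 = 1.
Proof.
rewrite /dot3 !big_ord_recr !big_ord0 /= !mxE /=.
have h1 : Num.sqrt (15:R) ^+ 2 = 15 by rewrite sqr_sqrtr // ler0n.
move: h1; set s := Num.sqrt 15 => h1.

nra.
Qed.
End T.

Section U.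
Variable R : rcfType.
Lemma psd_form' (A : 'M[R[i]]_2) (v : 'cV[R[i]]_2) :
  \sum_(i < 2) \sum_(j < 2) (v i 0)^* * A i j * v j 0 =
  (v 0 0)^* * A 0 0 * v 0 0 + (v 0 0)^* * A 0 1 * v 1 0 +
  (v 1 0)^* * A 1 0 * v 0 0 + (v 1 0)^* * A 1 1 * v 1 0.
Proof.
rewrite !big_ord_recr !big_ord0 /= !add0r.
have -> : widen_ord (leqnSn 1) ord_max = 0 :> 'I_2 by apply/val_inj.
have -> : ord_max = 1 :> 'I_2 by apply/val_inj.
by rewrite !addrA.
Qed.

Definition vec (a b : R[i]) : 'cV[R[i]]_2 := \col_(i < 2) (if i == 0 then a else b).

Lemma notJM : ~ jointly_measurable (povm2 (Emat R)) (povm2 (Bmat R)).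
Proof.
move=> [N [hpsd [hrow hcol]]].
have r0 := hrow 0; have c0 := hcol 0; have c1 := hcol 1.
rewrite /povm2 /= !big_ord_recr !big_ord0 /= !add0r in r0 c0 c1.
have e0 : widen_ord (leqnSn 1) ord_max = 0 :> 'I_2 by apply/val_inj.
have e1 : ord_max = 1 :> 'I_2 by apply/val_inj.
rewrite e0 e1 in r0 c0 c1.
have h01 : N 0 1 = Emat R - N 0 0 by rewrite -r0 addrC addrK.
have h10 : N 1 0 = Bmat R - N 0 0 by rewrite -c0 addrC addrK.
have h11 : N 1 1 = 1%:M - Bmat R - N 0 1 by rewrite -c1 addrC addrK.
rewrite h01 in h11.
have p1 := hpsd 0 0 (vec 0 1); have p2 := hpsd 0 1 (vec 0 1).
have p3 := hpsd 0 0 (vec 1 (-1)); have p4 := hpsd 1 0 (vec 1 (-1)).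
have p5 := hpsd 0 0 (vec 1 (-2)); have p6 := hpsd 1 1 (vec 1 0).
rewrite h01 in p2; rewrite h10 in p4; rewrite h11 in p6.
move: p1 p2 p3 p4 p5 p6; rewrite /psd !psd_form' !mxE /= .
have hs : 7/2 < Num.sqrt (15:R).
  rewrite -(@ltr_pXn2r _ 2) ?nnegrE ?sqrtr_ge0 //; last lra.
  by rewrite sqr_sqrtr ?ler0n //; lra.
move: hs; set s := Num.sqrt (15:R) => hs.
case: (N 0 0 0 0) => x1 y1; case: (N 0 0 0 1) => x2 y2;
case: (N 0 0 1 0) => x3 y3; case: (N 0 0 1 1) => x4 y4.
rewrite !lecE; simpc => /=.
do 6 move=> /andP[_ ?].
clear e0 e1 r0 c0 c1 h01 h10 h11 hpsd hrow hcol. lra.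
Qed.
End U.
Local Close Scope complex_scope.

Theorem mainTheorem4 (R : rcfType) :
  Emat R = bloch (Num.sqrt 15 / 4) (evec R) /\
  Bmat R = bloch (1 / 4) (bvec R) /\
  effect (Emat R) /\ effect (Bmat R) /\
  dot3 (evec R) (evec R) + dot3 (bvec R) (bvec R)
    - (dot3 (evec R) (bvec R)) ^+ 2 = 1 /\
  ~ jointly_measurable (povm2 (Emat R)) (povm2 (Bmat R)).
Proof.
split; first exact: blE.
split; first exact: blB.
split; first exact: effE.
split; first exact: effB.
split; first exact: dotE.
exact: notJM.
Qed.
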